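(* Let $\delta\ge1$, $n\ge1$, let $H_1,\dots,H_{\delta+n}$ be general hyperplanes in $\mathbb{P}^n=\mathbb{P}V$ with equations $h_i\in V^*$, and let $Z$ be the set of $\binom{\delta+n}{n}$ points $\bigcap_{i\in L}H_i$, $L\subset\{1,\dots,\delta+n\}$, $|L|=n$. Then the linear system of hypersurfaces of degree $2\delta+1$ singular at every point of $Z$ has the expected codimension $(n+1)\binom{\delta+n}{n}$ in $S^{2\delta+1}V^*$, and it is spanned by the products $h_I=\prod_{i=1}^{\delta+n}h_i^{k_i}$, where $I$ ranges over multi-indices (repetitions allowed) with $|I|=\sum k_i=2\delta+1$, all exponents $k_i\le2$, and support $\#\{i:k_i>0\}\ge\delta+2$. *)

(* Defs.v *)
From HB Require Import structures.
From mathcomp Require Import all_boot all_order all_algebra.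
From mathcomp Require Import mpoly.
Set Implicit Arguments. Unset Strict Implicit. Unset Printing Implicit Defensive.
Import Order.TTheory GRing.Theory.
Local Open Scope ring_scope.

Section Defs.
Variable k : fieldType.

(* A linear form on V = k^(n+1), given by its coefficient row vector,
   seen as an element of S^1 V^* = degree-1 forms in {mpoly k[n.+1]}. *)
Definition linform (n : nat) (h : 'rV[k]_n.+1) : {mpoly k[n.+1]} :=
  \sum_(j < n.+1) h 0 j *: 'X_j.

(* p lies in S^d V^* : homogeneous of degree d (0 included). *)
Definition homogeneous (n d : nat) (p : {mpoly k[n]}) : bool :=
  all (fun m => mdeg m == d) (msupp p).

Definition singular_at (n : nat) (F : {mpoly k[n.+1]}) (v : 'rV[k]_n.+1) : Prop :=
  forall j : 'I_n.+1, (mderiv j F).@[fun i => v 0 i] = 0.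

(* F is singular at every point of Z = { cap_{i in L} H_i : |L| = n },
   where H_i is the hyperplane with equation h_i = row i H. *)
Definition singular_on_Z (m n : nat) (H : 'M[k]_(m, n.+1)) (F : {mpoly k[n.+1]}) : Prop :=
  forall L : {set 'I_m}, #|L| = n ->
  forall v : 'rV[k]_n.+1, v != 0 ->
    (forall i, i \in L -> (linform (row i H)).@[fun j => v 0 j] = 0) ->
    singular_at F v.

(* h_I = prod_i h_i^(k_i), with exponent vector e : 'I_m -> {0,1,2}. *)
Definition hprod (m n : nat) (H : 'M[k]_(m, n.+1)) (e : {ffun 'I_m -> 'I_3}) : {mpoly k[n.+1]} :=
  \prod_(i < m) linform (row i H) ^+ e i.

(* |I| = 2 delta + 1 and support of size >= delta + 2 (k_i <= 2 by typing). *)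
Definition admissible (m delta : nat) (e : {ffun 'I_m -> 'I_3}) : bool :=
  ((\sum_(i < m) (e i : nat))%N == (2 * delta).+1)
  && (delta + 2 <= #|[pred i | (e i : nat) != 0%N]|)%N.

Definition lin_indep (n : nat) (s : seq {mpoly k[n]}) : Prop :=
  forall c : 'I_(size s) -> k,
    \sum_(i < size s) c i *: s`_i = 0 -> forall i, c i = 0.

Definition in_span (n : nat) (s : seq {mpoly k[n]}) (F : {mpoly k[n]}) : Prop :=
  exists c : 'I_(size s) -> k, F = \sum_(i < size s) c i *: s`_i.

Definition has_dim (n : nat) (W : {mpoly k[n]} -> Prop) (d : nat) : Prop :=
  exists s : seq {mpoly k[n]}, size s = d /\ (forall F, F \in s -> W F) /\
    lin_indep s /\ (forall F, W F -> in_span s F).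

End Defs.

(* Main.v *)
Require Import Defs.
From HB Require Import structures.
From mathcomp Require Import all_boot all_order all_algebra.
From mathcomp Require Import mpoly.
From mathcomp Require Import ring lra zify.
From Stdlib Require Import Classical.
Set Implicit Arguments. Unset Strict Implicit. Unset Printing Implicit Defensive.
Import Order.TTheory GRing.Theory.
Local Open Scope ring_scope.

Section Span.
Variables (k : fieldType) (N : nat).
Local Notation poly := {mpoly k[N]}.

Fixpoint spanL (s : seq poly) (F : poly) : Prop :=
  if s is x :: s' then exists c, spanL s' (F - c *: x) else F = 0.
Fixpoint indepL (s : seq poly) : Prop :=
  if s is x :: s' then ~ spanL s' x /\ indepL s' else True.

Definition subsp (S : poly -> Prop) := S 0 /\ forall a x y, S x -> S y -> S (a *: x + y).

Lemma subsp0 S : subsp S -> S 0. Proof. by case. Qed.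
Lemma subspD S x y : subsp S -> S x -> S y -> S (x + y).
Proof. by case=> _ h Sx Sy; have := h 1 _ _ Sx Sy; rewrite scale1r. Qed.
Lemma subspZ S a x : subsp S -> S x -> S (a *: x).
Proof. by move=> [h0 h] Sx; have := h a _ _ Sx h0; rewrite addr0. Qed.
Lemma subspN S x : subsp S -> S x -> S (- x).
Proof. by move=> hS Sx; rewrite -scaleN1r; apply: subspZ. Qed.
Lemma subspB S x y : subsp S -> S x -> S y -> S (x - y).
Proof. by move=> hS Sx Sy; apply: subspD => //; apply: subspN. Qed.
Lemma subsp_sum S (I : Type) (r : seq I) (P : pred I) (f : I -> poly) :
  subsp S -> (forall i, P i -> S (f i)) -> S (\sum_(i <- r | P i) f i).
Proof.
move=> hS hf; elim/big_rec: _ => [|i x Pi Sx]; first exact: subsp0.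
by apply: subspD => //; apply: hf.
Qed.

Lemma spanL_subsp s : subsp (spanL s).
Proof.
elim: s => [|x s IH] /=; first by split=> // a x y -> ->; rewrite scaler0 addr0.
split; first by exists 0; rewrite scale0r subr0; apply: subsp0.
move=> a y z [c1 h1] [c2 h2]; exists (a * c1 + c2).
have -> : a *: y + z - (a * c1 + c2) *: x = a *: (y - c1 *: x) + (z - c2 *: x).
  by rewrite scalerDl scalerBr scalerA; rewrite addrACA opprD.
by case: IH => _ IH; apply: IH.
Qed.

Lemma spanL_mem s x : x \in s -> spanL s x.
Proof.
elim: s => [|y s IH] //=; rewrite inE => /orP [/eqP ->|xs].
  by exists 1; rewrite scale1r subrr; apply: subsp0; apply: spanL_subsp.
by exists 0; rewrite scale0r subr0; apply: IH.
Qed.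

Lemma spanL_sub s t F : (forall x, x \in s -> spanL t x) -> spanL s F -> spanL t F.
Proof.
elim: s F => [|x s IH] F /= hst; first by move=> ->; apply: subsp0; apply: spanL_subsp.
move=> [c hc]; have -> : F = c *: x + (F - c *: x) by rewrite addrC subrK.
have hS := spanL_subsp t.
apply: subspD => //; first by apply: subspZ => //; apply: hst; rewrite inE eqxx.
by apply: IH => // y ys; apply: hst; rewrite inE ys orbT.
Qed.

Lemma spanL_cat s1 s2 F : spanL (s1 ++ s2) F ->
  exists F1 F2, [/\ spanL s1 F1, spanL s2 F2 & F = F1 + F2].
Proof.
elim: s1 F => [|x s1 IH] F /=.
  by move=> h; exists 0, F; split => //; rewrite add0r.
move=> [c /IH [F1 [F2 [h1 h2 e]]]]; exists (F1 + c *: x), F2; split => //.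
  by exists c; rewrite addrK.
by rewrite addrAC -e subrK.
Qed.

Lemma spanL_catl s1 s2 F : spanL s1 F -> spanL (s1 ++ s2) F.
Proof. by apply: spanL_sub => x xs; apply: spanL_mem; rewrite mem_cat xs. Qed.
Lemma spanL_catr s1 s2 F : spanL s2 F -> spanL (s1 ++ s2) F.
Proof. by apply: spanL_sub => x xs; apply: spanL_mem; rewrite mem_cat xs orbT. Qed.

Lemma indepL_cat s1 s2 : indepL s1 -> indepL s2 ->
  (forall F, spanL s1 F -> spanL s2 F -> F = 0) -> indepL (s1 ++ s2).
Proof.
elim: s1 => [|x s1 IH] //= [nx i1] i2 hdis; split; last first.
  apply: IH => // F h1 h2; apply: hdis => //.
  by apply: (spanL_sub (t := x :: s1) (s := s1)) => // y ys; apply: spanL_mem; rewrite inE ys orbT.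
move/spanL_cat=> [F1 [F2 [h1 h2 e]]]; apply: nx.
have eF2 : F2 = 0.
  apply: hdis => //; have -> : F2 = x - F1 by rewrite e addrC addKr.
  apply: (subspB (spanL_subsp (x :: s1))).
    by apply: (@spanL_mem (x :: _)); rewrite inE eqxx.
  by apply: (spanL_sub (t := x :: s1) (s := s1)) => // y ys; apply: spanL_mem; rewrite inE ys orbT.
by rewrite e eF2 addr0.
Qed.

Lemma extract (s : seq poly) : exists t : seq poly, [/\ indepL t, (forall x, x \in t -> x \in s) &
  (forall x, x \in s -> spanL t x)].
Proof.
elim: s => [|x s [t [it ts st]]]; first by exists [::].
case: (classic (spanL t x)) => [xt|nxt].
  exists t; split => // [y /ts|y]; first by rewrite inE => ->; rewrite orbT.
  by rewrite inE => /orP [/eqP ->|/st //].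
exists (x :: t); split => //=.
- by move=> y; rewrite !inE => /orP [->|/ts ->]; rewrite ?orbT.
- move=> y; rewrite inE => /orP [/eqP ->|/st ys]; last first.
    by apply: (spanL_sub (t := x :: t) (s := t)) => // z zt; apply: spanL_mem; rewrite inE zt orbT.
  by apply: (@spanL_mem (x :: _)); rewrite inE eqxx.
Qed.

Lemma spanL_map (T : eqType) (f : T -> poly) (r : seq T) F :
  uniq r -> spanL (map f r) F -> exists c : T -> k, F = \sum_(y <- r) c y *: f y.
Proof.
elim: r F => [|x r IH] F /=; first by move=> _ ->; exists (fun _ => 0); rewrite big_nil.
move=> /andP [xr ur] [a /(IH _ ur) [c hc]].
exists (fun y => if y == x then a else c y); rewrite big_cons eqxx.
have -> : \sum_(y <- r) (if y == x then a else c y) *: f y = \sum_(y <- r) c y *: f y.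
  by apply: eq_big_seq => y yr; case: eqP => // eyx; move: xr; rewrite -eyx yr.
by rewrite -hc addrC subrK.
Qed.


Lemma indepL_map (T : eqType) (f : T -> poly) (r : seq T) :
  uniq r -> (forall c : T -> k, \sum_(y <- r) c y *: f y = 0 -> forall y, y \in r -> c y = 0) ->
  indepL (map f r).
Proof.
elim: r => [|x r IH] //= /andP [xr ur] hc; split; last first.
  apply: IH => // c hs y yr.
  have := hc (fun z => if z == x then 0 else c z); rewrite big_cons eqxx scale0r add0r.
  have -> : \sum_(y <- r) (if y == x then 0 else c y) *: f y = \sum_(y <- r) c y *: f y.
    by apply: eq_big_seq => z zr; case: eqP => // ezx; move: xr; rewrite -ezx zr.
  move/(_ hs y); rewrite inE yr orbT => /(_ erefl).
  by case: eqP => [eyx|] // _; move: xr; rewrite -eyx yr.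
move/(spanL_map ur)=> [c hx].
have := hc (fun z => if z == x then 1 else - c z); rewrite big_cons eqxx scale1r.
have -> : \sum_(y <- r) (if y == x then 1 else - c y) *: f y = \sum_(y <- r) - (c y *: f y).
  by apply: eq_big_seq => z zr; case: eqP => [ezx|_]; [move: xr; rewrite -ezx zr|rewrite scaleNr].
rewrite sumrN -hx subrr => /(_ erefl x); rewrite inE eqxx => /(_ erefl) /eqP.
by rewrite oner_eq0.
Qed.

Lemma in_spanE s F : in_span s F <-> spanL s F.
Proof.
elim: s F => [|x s IH] F /=.
  by split=> [[c ->]|->]; [rewrite big_ord0|exists (fun _ => 0); rewrite big_ord0].
split.
  move=> [c ->]; rewrite big_ord_recl /=; exists (c ord0).
  by rewrite addrAC subrr add0r; apply/IH; exists (fun i => c (lift ord0 i)).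
move=> [a /IH [c hc]].
exists (fun i : 'I_(size s).+1 => if unlift ord0 i is Some j then c j else a).
rewrite big_ord_recl /= unlift_none; under eq_bigr do rewrite liftK.
by rewrite -hc addrC subrK.
Qed.

Lemma lin_indepE s : indepL s -> lin_indep s.
Proof.
elim: s => [|x s IH] /= [].
  by move=> c _ i; case: i.
move=> nx hi c; rewrite big_ord_recl /= => h0.
have c0 : c ord0 = 0.
  apply/eqP; apply/negP => nc; apply: nx; apply/in_spanE.
  exists (fun i => - (c ord0)^-1 * c (lift ord0 i)).
  have hsum : \sum_(i < size s) c (lift ord0 i) *: s`_i = - (c ord0 *: x).
    by apply/eqP; rewrite -addr_eq0 addrC h0.
  under eq_bigr do rewrite -scalerA.
  rewrite -scaler_sumr hsum scaleNr scalerN opprK scalerA mulVf ?scale1r //.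
  exact/negP.
have hs := IH hi (fun i => c (lift ord0 i)).
move: h0; rewrite c0 scale0r add0r => /hs hs' i.
by case: (unliftP ord0 i) => [j ->|->].
Qed.

End Span.

Section Basic.
Variables (k : fieldType) (n : nat).
Local Notation N := n.+1.
Local Notation poly := {mpoly k[N]}.
Implicit Types (vv : 'I_N -> k) (p q f g : poly).

Lemma mderivXU j t : mderiv j ('X_t : poly) = ((t == j)%:R)%:MP.
Proof.
rewrite mderivX mnm1E; case: eqP => [->|_].
  have -> : (U_(j) - U_(j))%MM = 0%MM by apply/mnmP => i; rewrite !mnmE subnn.
  by rewrite mpolyX0 scale1r mpolyC1.
by rewrite scale0r mpolyC0.
Qed.

Lemma linform0 : linform (0 : 'rV[k]_N) = 0.
Proof. by rewrite /linform big1 // => j _; rewrite mxE scale0r. Qed.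

Lemma linformD r1 r2 : linform (r1 + r2 : 'rV[k]_N) = linform r1 + linform r2.
Proof. by rewrite /linform -big_split; apply: eq_bigr => j _; rewrite mxE scalerDl. Qed.

Lemma linformZ a r : linform (a *: r : 'rV[k]_N) = a *: linform r.
Proof. by rewrite /linform scaler_sumr; apply: eq_bigr => j _; rewrite mxE scalerA. Qed.

Lemma linform_sum (I : Type) (s : seq I) (c : I -> k) (F : I -> 'rV[k]_N) :
  linform (\sum_(i <- s) c i *: F i) = \sum_(i <- s) c i *: linform (F i).
Proof.
rewrite (big_morph (@linform k n) linformD linform0).
by apply: eq_bigr => i _; rewrite linformZ.
Qed.

Lemma d_linform j (r : 'rV[k]_N) : mderiv j (linform r) = (r 0 j)%:MP.
Proof.
rewrite /linform raddf_sum (bigD1 j) //= mderivZ mderivXU eqxx.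
rewrite big1 ?addr0; first by rewrite -mul_mpolyC -mpolyCM mulr1.
by move=> t /negbTE tj; rewrite mderivZ mderivXU tj mpolyC0 scaler0.
Qed.

Lemma ev_linform vv (r : 'rV[k]_N) : (linform r).@[vv] = \sum_j r 0 j * vv j.
Proof. by rewrite /linform raddf_sum /=; apply: eq_bigr => j _; rewrite mevalZ mevalXU. Qed.

Lemma sing_prod2 vv f g q j : f.@[vv] = 0 -> g.@[vv] = 0 ->
  (mderiv j (f * (g * q))).@[vv] = 0.
Proof.
move=> hf hg; rewrite !mderivM !(mevalD, mevalM) hf hg.
by rewrite !(mul0r, mulr0, addr0).
Qed.

(* Euler-type operator evaluated at a point *)
Definition ee vv p := \sum_j vv j * (mderiv j p).@[vv].

Lemma eeM vv p q : ee vv (p * q) = ee vv p * q.@[vv] + p.@[vv] * ee vv q.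
Proof.
rewrite /ee mulr_suml mulr_sumr -big_split; apply: eq_bigr => j _.
by rewrite mderivM mevalD !mevalM /=; ring.
Qed.

Lemma ee_linform vv (r : 'rV[k]_N) : ee vv (linform r) = (linform r).@[vv].
Proof.
rewrite ev_linform /ee; apply: eq_bigr => j _.
by rewrite d_linform mevalC mulrC.
Qed.

Lemma ee1 vv : ee vv 1 = 0.
Proof. by rewrite /ee big1 // => j _; rewrite -mpolyC1 mderivC meval0 mulr0. Qed.

Lemma ee_prod_sq vv (I : Type) (s : seq I) (F : I -> 'rV[k]_N) :
  ee vv (\prod_(i <- s) linform (F i) ^+ 2) =
  (2 * size s)%:R * (\prod_(i <- s) linform (F i) ^+ 2).@[vv].
Proof.
elim: s => [|x s IH]; first by rewrite big_nil ee1 mul0r.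
rewrite big_cons eeM IH expr2 eeM ee_linform /= !mevalM.
rewrite mulnS natrD natrM; set a := (linform (F x)).@[vv].
set b := (\prod_(j <- s) _).@[vv].
ring.
Qed.
End Basic.

Section Homog.
Variables (k : fieldType) (n : nat).
Local Notation N := n.+1.
Local Notation poly := {mpoly k[N]}.

Lemma homogeneousE d (F : poly) : homogeneous d F = (F \is d.-homog).
Proof. by rewrite dhomogE. Qed.

Lemma linform_homog (r : 'rV[k]_N) : linform r \is 1.-homog.
Proof.
rewrite /linform; apply: rpred_sum => j _; apply: dhomogZ.
by rewrite dhomogX /= mdeg1.
Qed.

Lemma prod_homog (I : Type) (s : seq I) (F : I -> poly) (d : I -> nat) :
  (forall i, F i \is (d i).-homog) ->
  \prod_(i <- s) F i \is (\sum_(i <- s) d i)%N.-homog.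
Proof.
move=> hF; elim: s => [|x s IH]; first by rewrite !big_nil dhomog1.
by rewrite !big_cons; apply: dhomogM.
Qed.

Lemma prod_lin_homog (I : Type) (s : seq I) (F : I -> 'rV[k]_N) (e : I -> nat) :
  \prod_(i <- s) linform (F i) ^+ e i \is (\sum_(i <- s) e i)%N.-homog.
Proof.
apply: prod_homog => i; have := dhomogMn (e i) (linform_homog (F i)).
by rewrite mul1n.
Qed.
End Homog.

Section Geo.
Variables (k : fieldType) (delta n : nat) (H : 'M[k]_(delta + n, n.+1)).
Local Notation m := (delta + n)%N.
Local Notation N := n.+1.
Local Notation poly := {mpoly k[N]}.

Definition hh (i : 'I_m) : poly := linform (row i H).
Definition hp (J : 'I_m -> nat) : poly := \prod_(i < m) hh i ^+ J i.
Definition QQ (L : {set 'I_m}) : poly := \prod_(i <- enum (~: L)) hh i ^+ 2.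
Definition Qf (p : {set 'I_m} * 'I_N) : poly := QQ p.1 * 'X_(p.2).
Definition Qidx := [seq (L, j) | L <- enum [set L : {set 'I_m} | #|L| == n], j <- enum 'I_N].
Definition Qs := map Qf Qidx.
Definition hIlist :=
  [seq hprod H e | e <- enum [pred e : {ffun 'I_m -> 'I_3} | admissible delta e]].
Definition gen := forall s : 'I_N -> 'I_m, injective s ->
  \det (\matrix_(a, b) H (s a) b) != 0.
Definition evv (v : 'rV[k]_N) := fun j => v 0 j.

Lemma hp_ext J K : J =1 K -> hp J = hp K.
Proof. by move=> e; apply: eq_bigr => i _; rewrite e. Qed.

Lemma hp0 : hp (fun _ => 0%N) = 1.
Proof. by rewrite /hp big1 // => i _; rewrite expr0. Qed.

Lemma hp_add J K : hp (fun i => J i + K i)%N = hp J * hp K.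
Proof. by rewrite /hp -big_split; apply: eq_bigr => i _; rewrite exprD. Qed.

Lemma hp_unit i : hp (fun t => (t == i) : nat) = hh i.
Proof.
rewrite /hp (bigD1 i) //= eqxx expr1 big1 ?mulr1 // => t /negbTE ->.
by rewrite expr0.
Qed.

Lemma hp_homog J : hp J \is (\sum_i J i)%N.-homog.
Proof. exact: prod_lin_homog. Qed.

Lemma QQ_homog (L : {set 'I_m}) : #|L| = n -> QQ L \is (2 * delta)%N.-homog.
Proof.
move=> hL; have := prod_lin_homog (enum (~: L)) (fun i => row i H) (fun _ => 2%N).
rewrite big_const_seq count_predT -cardE.
have -> : #|~: L| = delta by have := cardsC L; rewrite card_ord hL; lia.
by rewrite iter_addn_0 mulnC.
Qed.

Lemma Qf_homog (p : {set 'I_m} * 'I_N) : #|p.1| = n -> Qf p \is (2 * delta).+1.-homog.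
Proof.
move=> hL; rewrite /Qf (_ : ((2 * delta).+1 = 2 * delta + 1)%N); last by rewrite addn1.
apply: dhomogM; first exact: QQ_homog.
by rewrite dhomogX /= mdeg1.
Qed.

Lemma kernel_exists (L : {set 'I_m}) : #|L| = n ->
  exists v : 'rV[k]_N, v != 0 /\ forall i, i \in L -> (hh i).@[evv v] = 0.
Proof.
move=> hL.
pose A : 'M[k]_(n, N) := \matrix_(a, b) H (enum_val (cast_ord (esym hL) a)) b.
have hK := mulmx_ker A^T; have rK := mxrank_ker A^T.
set K := kermx A^T in hK rK *; clearbody K.
have : (0 < \rank K)%N.
  by rewrite rK; have := rank_leq_col A^T; lia.
case: (boolP [exists a, row a K != 0]) => [/existsP [a ha] _|].
  exists (row a K); split => // i iL.
  move: hK => /(congr1 (row a)); rewrite row_mul row0 => /rowP.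
  set i' := cast_ord hL (enum_rank_in iL i).
  move=> /(_ i') hi; rewrite !mxE in hi.
  rewrite /hh ev_linform -[RHS]hi; apply: eq_bigr => b _; rewrite !mxE mulrC.
  by rewrite /evv mxE /i' cast_ordK (enum_rankK_in iL iL).
move=> /existsPn hall.
have -> : K = 0.
  by apply/row_matrixP => a; rewrite row0; apply/eqP; have := hall a; rewrite negbK.
by rewrite mxrank0.
Qed.

Lemma sing_hp (v : 'rV[k]_N) (L : {set 'I_m}) J a b :
  (forall i, i \in L -> (hh i).@[evv v] = 0) ->
  a \in L -> b \in L -> a != b -> (0 < J a)%N -> (0 < J b)%N ->
  singular_at (hp J) v.
Proof.
move=> hv aL bL ab Ja Jb j.
have -> : hp J = hh a * (hh b * (hh a ^+ (J a).-1 * (hh b ^+ (J b).-1 *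
    \prod_(i < m | (i != a) && (i != b)) hh i ^+ J i))).
  rewrite /hp (bigD1 a) //= (bigD1 b) //=; last by rewrite eq_sym.
  rewrite -(prednK Ja) -(prednK Jb) !exprS /=; ring.
exact: sing_prod2 (hv _ aL) (hv _ bL).
Qed.

Lemma sing_Qf (v : 'rV[k]_N) (L L' : {set 'I_m}) j :
  (forall i, i \in L -> (hh i).@[evv v] = 0) ->
  #|L| = n -> #|L'| = n -> L' != L -> singular_at (Qf (L', j)) v.
Proof.
move=> hv hL hL' LL'.
have [i iL iL'] : exists2 i, i \in L & i \notin L'.
  case/boolP: (L \subset L') => [sub|/subsetPn [i iL iL']]; last by exists i.
  by move: LL'; rewrite eq_sym eqEcard sub hL hL' leqnn.
have iC : i \in enum (~: L') by rewrite mem_enum inE.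
rewrite /Qf /QQ /= (bigD1_seq i) //= ?enum_uniq // expr2 => t.
rewrite -!mulrA; exact: sing_prod2 (hv _ iL) (hv _ iL).
Qed.

Lemma ev_QQ vv (L : {set 'I_m}) :
  (QQ L).@[vv] = \prod_(i <- enum (~: L)) (hh i).@[vv] ^+ 2.
Proof. by rewrite /QQ rmorph_prod; apply: eq_bigr => i _; rewrite rmorphXn. Qed.

Lemma gen_nz (v : 'rV[k]_N) (L : {set 'I_m}) i : gen -> #|L| = n -> v != 0 ->
  (forall i, i \in L -> (hh i).@[evv v] = 0) -> i \notin L -> (hh i).@[evv v] != 0.
Proof.
move=> hg hL v0 hv iL; apply/eqP => hi.
have hS : #|i |: L| = N by rewrite cardsU1 iL hL.
pose s (a : 'I_N) := enum_val (cast_ord (esym hS) a).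
have sinj : injective s by move=> a b /enum_val_inj /cast_ord_inj.
pose M := \matrix_(a, b) H (s a) b.
have Mu : M \in unitmx by rewrite unitmxE unitfE; exact: hg.
have hM : M *m v^T = 0.
  apply/matrixP => a c; rewrite !mxE.
  have : s a \in i |: L by exact: enum_valP.
  rewrite in_setU1 => sa.
  transitivity ((hh (s a)).@[evv v]); last by case/orP: sa => [/eqP ->|/hv ->].
  by rewrite ev_linform; apply: eq_bigr => b _; rewrite /M /evv !mxE (ord1 c).
move: v0; have : v^T = 0 by rewrite -(mulKmx Mu v^T) hM mulmx0.
by rewrite -trmx0 => /trmx_inj ->; rewrite eqxx.
Qed.

Lemma gen_rel (s : 'I_N -> 'I_m) (r : 'rV[k]_N) : gen -> injective s ->
  exists u : 'I_N -> k, linform r = \sum_a u a *: hh (s a).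
Proof.
move=> hg sinj; pose M := \matrix_(a, b) H (s a) b.
have Mu : M \in unitmx by rewrite unitmxE unitfE; exact: hg.
exists (fun a => (r *m invmx M) 0 a).
have er : r = \sum_a (r *m invmx M) 0 a *: row (s a) H.
  rewrite -{1}(mulmxKV Mu r) mulmx_sum_row; apply: eq_bigr => a _.
  by congr (_ *: _); apply/rowP => b; rewrite !mxE.
by rewrite {1}er linform_sum.
Qed.

Lemma QidxP (p : {set 'I_m} * 'I_N) : (p \in Qidx) = (#|p.1| == n).
Proof.
case: p => L j; apply/allpairsP/idP => [[q [q1 _ e]]|hp].
  by move: q1; rewrite mem_enum inE; case: e => -> _.
by exists (L, j); rewrite !mem_enum inE hp.
Qed.

Lemma Qidx_uniq : uniq Qidx.
Proof.
apply: allpairs_uniq; rewrite ?enum_uniq //.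
by move=> [a b] [c d] _ _ /= [-> ->].
Qed.

Lemma size_Qs : size Qs = ('C(m, n) * N)%N.
Proof.
rewrite size_map size_allpairs -!cardE card_ord.
by have := card_draws 'I_m n; rewrite card_ord => ->.
Qed.

Lemma dsum t (I : Type) (s : seq I) (P : pred I) (F : I -> poly) :
  mderiv t (\sum_(i <- s | P i) F i) = \sum_(i <- s | P i) mderiv t (F i).
Proof. exact: raddf_sum. Qed.

Lemma esum vv (I : Type) (s : seq I) (P : pred I) (F : I -> poly) :
  (\sum_(i <- s | P i) F i).@[vv] = \sum_(i <- s | P i) (F i).@[vv].
Proof. exact: raddf_sum. Qed.

Lemma blockK (hk : [pchar k] =i pred0) (c : {set 'I_m} * 'I_N -> k) : gen ->
  singular_on_Z H (\sum_(p <- Qidx) c p *: Qf p) ->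
  forall p, p \in Qidx -> c p = 0.
Proof.
move=> hg hsing [L j0]; rewrite QidxP /= => /eqP hL.
have [v [v0 hv]] := kernel_exists hL.
have := hsing L hL v v0 hv.
rewrite /Qidx big_allpairs (bigD1_seq L) /=; last (by rewrite enum_uniq); last by rewrite mem_enum inE hL.
pose r : 'rV[k]_N := \row_j c (L, j).
have eGL : \sum_(j <- enum 'I_N) c (L, j) *: Qf (L, j) = QQ L * linform r.
  rewrite /linform mulr_sumr big_enum /=; apply: eq_bigr => j _.
  by rewrite /Qf /= mxE scalerAr.
rewrite eGL => hs.
have ht : forall t, (mderiv t (QQ L * linform r)).@[evv v] = 0.
  move=> t; have := hs t; rewrite mderivD mevalD.
  have -> : ((\sum_(i <- enum [set L0 : {set 'I_m} | #|L0| == n] | i != L)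
       \sum_(i2 <- enum 'I_N) c (i, i2) *: Qf (i, i2))^`M(t)).@[evv v] = 0; last by rewrite addr0.
  rewrite dsum esum big1_seq // => L' /andP [LL' L'S].
  rewrite dsum esum big1_seq // => j _.
  rewrite mderivZ mevalZ; have := sing_Qf j hv hL _ LL'.
  by move: L'S; rewrite mem_enum inE => /eqP hL' /(_ hL') ->; rewrite mulr0.
pose q := (QQ L).@[evv v].
have qnz : q != 0.
  rewrite /q ev_QQ prodf_seq_neq0; apply/allP => i; rewrite mem_enum inE => iL.
  by rewrite /= expf_neq0 //; exact: gen_nz hg hL v0 hv iL.
have eqt : forall t, (mderiv t (QQ L)).@[evv v] * (linform r).@[evv v] + q * c (L, t) = 0.
  move=> t; have := ht t; rewrite mderivM mevalD !mevalM d_linform mevalC.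
  by rewrite /r mxE.
have hsum : (2 * size (enum (~: L))).+1%:R * q * (linform r).@[evv v] = 0.
  have := ee_prod_sq (evv v) (enum (~: L)) (fun i => row i H).
  rewrite -/(QQ L) -/q /ee => hee.
  have e2 : \sum_t evv v t * c (L, t) = (linform r).@[evv v].
    by rewrite ev_linform; apply: eq_bigr => t _; rewrite /r mxE mulrC.
  have : \sum_t (evv v t * ((QQ L)^`M(t)).@[evv v] * (linform r).@[evv v] + q * (evv v t * c (L, t))) = 0.
    rewrite big1 // => t _.
    transitivity (evv v t * (((QQ L)^`M(t)).@[evv v] * (linform r).@[evv v] + q * c (L, t))).
      by ring.
    by rewrite eqt mulr0.
  rewrite big_split /= -mulr_suml -mulr_sumr hee e2 => h1.
  by rewrite -h1 -addn1 natrD; ring.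
have n0 : ((2 * size (enum (~: L))).+1%:R : k) != 0.
  by have /pcharf0P -> := hk.
have l0 : (linform r).@[evv v] = 0.
  by apply/eqP; move: hsum => /eqP; rewrite !mulf_eq0 (negbTE n0) (negbTE qnz).
by have := eqt j0; rewrite l0 mulr0 add0r => /eqP; rewrite mulf_eq0 (negbTE qnz) => /eqP.
Qed.

Definition Tgt := spanL (hIlist ++ Qs).

Lemma Tgt_subsp : subsp Tgt.
Proof. exact: spanL_subsp. Qed.

Lemma QhL (L : {set 'I_m}) j : #|L| = n -> Tgt (QQ L * hh j).
Proof.
move=> hL; rewrite /hh /linform mulr_sumr.
apply: subsp_sum; first exact: Tgt_subsp.
move=> t _; rewrite -scalerAr; apply: subspZ; first exact: Tgt_subsp.
apply: spanL_catr; apply: spanL_mem; apply/mapP; exists (L, t) => //.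
by rewrite QidxP /= hL.
Qed.

Lemma adm_in e : admissible delta e -> Tgt (hprod H e).
Proof.
move=> he; apply: spanL_catl; apply: spanL_mem; apply/mapP; exists e => //.
by rewrite mem_enum.
Qed.

Lemma sum_swap (f g : 'I_m -> nat) i j : i != j ->
  (forall t, t != i -> t != j -> g t = f t) ->
  (\sum_t g t + (f i + f j) = \sum_t f t + (g i + g j))%N.
Proof.
move=> ij hgf; rewrite (bigD1 i) //= (bigD1 j) //=; last by rewrite eq_sym.
rewrite [in RHS](bigD1 i) //= [in RHS](bigD1 j) //=; last by rewrite eq_sym.
have -> : (\sum_(t | (t != i) && (t != j)) g t = \sum_(t | (t != i) && (t != j)) f t)%N.
  by apply: eq_bigr => t /andP [ti tj]; rewrite hgf.
set S := (X in (g j + X)%N).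
rewrite [X in _ = X](_ : _ = f i + (f j + S) + (g i + g j))%N //; lia.
Qed.

Lemma sum_bool (P : {pred 'I_m}) : (\sum_t ((t \in P) : nat))%N = #|P|.
Proof.
by rewrite -sum1_card [RHS]big_mkcond /=; apply: eq_bigr => t _; case: (t \in P).
Qed.

Definition psi (J : 'I_m -> nat) := (\sum_t J t * J t)%N.

Lemma QQC (A : {set 'I_m}) : QQ (~: A) = \prod_(i in A) hh i ^+ 2.
Proof. by rewrite /QQ setCK big_enum. Qed.

Lemma caseA J : (\sum_i J i)%N = (2 * delta).+1 -> (forall i, J i <= 2)%N ->
  Tgt (hp J).
Proof.
move=> hs hle.
pose e := [ffun i => inord (J i) : 'I_3].
have eJ : forall i, (e i : nat) = J i by move=> i; rewrite ffunE inordK // ltnS.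
have hpe : hp J = hprod H e by apply: eq_bigr => i _; rewrite eJ.
have se : (\sum_i (e i : nat))%N = (2 * delta).+1.
  by rewrite -hs; apply: eq_bigr => i _; rewrite eJ.
case: (leqP (delta + 2) #|[pred i | (e i : nat) != 0%N]|) => hsupp.
  by rewrite hpe; apply: adm_in; rewrite /admissible se eqxx hsupp.
pose A := [set i | J i == 2%N]; pose B := [set i | J i == 1%N].
have sJ : (\sum_i J i = 2 * #|A| + #|B|)%N.
  rewrite -!sum_bool big_distrr -big_split /=; apply: eq_bigr => i _.
  rewrite !inE; have := hle i; case: (J i) => [|[|[|]]] //.
have sS : #|[pred i | (e i : nat) != 0%N]| = (#|A| + #|B|)%N.
  rewrite -!sum_bool -big_split /=; apply: eq_bigr => i _.
  rewrite !inE eJ; have := hle i; case: (J i) => [|[|[|]]] //.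
have cA : #|A| = delta by lia.
have /cards1P [j Bj] : #|B| == 1%N by apply/eqP; lia.
have Jj : J j = 1%N by have := set11 j; rewrite -Bj inE => /eqP.
have -> : hp J = QQ (~: A) * hh j.
  rewrite QQC /hp (bigD1 j) //= Jj expr1 mulrC; congr (_ * _).
  rewrite big_mkcond [RHS]big_mkcond /=; apply: eq_bigr => i _.
  rewrite inE; case: eqP => [-> |ij]; first by rewrite Jj.
  have : i \notin B by rewrite Bj in_set1; apply/eqP.
  rewrite inE /=; have := hle i; case: (J i) => [|[|[|]]] //= _ _.
apply: QhL; have := cardsC A; rewrite card_ord cA => hcA.
apply/eqP; rewrite -(eqn_add2l delta); apply/eqP; exact: hcA.
Qed.

Lemma caseB2 J i : (1 <= delta)%N -> (\sum_t J t)%N = (2 * delta).+1 ->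
  (forall t, J t <= J i)%N -> (3 <= J i)%N ->
  (delta < #|[set t | (t != i) && (J i <= (J t).+1)]| + 2)%N -> Tgt (hp J).
Proof.
move=> hd hs hmax h3; set Bs := [set t | _] => hB.
have iB : i \notin Bs by rewrite inE eqxx.
have hsplit : (\sum_t J t = J i + \sum_(t in Bs) J t + \sum_(t | t \notin i |: Bs) J t)%N.
  by rewrite (bigID (fun t => t \in i |: Bs)) /= big_setU1.
have lowB : (#|Bs| * (J i).-1 <= \sum_(t in Bs) J t)%N.
  rewrite -sum_nat_const; apply: leq_sum => t; rewrite inE => /andP [_ h]; lia.
have low2 : (2 * #|Bs| <= #|Bs| * (J i).-1)%N.
  by rewrite mulnC leq_mul2l; apply/orP; right; lia.
set S1 := (\sum_(t in Bs) J t)%N in hsplit lowB.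
set S2 := (\sum_(t | t \notin i |: Bs) J t)%N in hsplit.
set X := (#|Bs| * (J i).-1)%N in lowB low2.
have hJi : J i = 3%N by lia.
have hS2 : S2 = 0%N by lia.
have hS1 : S1 = (2 * #|Bs|)%N by lia.
have hb : (#|Bs|.+1 = delta)%N by lia.
have J2 : forall t, t \in Bs -> J t = 2%N.
  have : (\sum_(t in Bs) (J t - 2) == 0)%N.
    have e : (S1 = \sum_(t in Bs) 2 + \sum_(t in Bs) (J t - 2))%N.
      rewrite /S1 -big_split /=; apply: eq_bigr => t; rewrite inE => /andP [_ h].
      lia.
    by move: e; rewrite sum_nat_const hS1 mulnC; lia.
  rewrite sum_nat_eq0 => /forallP hf t tB; have := hf t; rewrite tB /=.
  by move: tB; rewrite inE => /andP [_ h] /eqP; lia.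
have J0 : forall t, t \notin i |: Bs -> J t = 0%N.
  move: hS2 => /eqP; rewrite /S2 sum_nat_eq0 => /forallP hf t tB.
  by have := hf t; rewrite tB => /eqP.
have -> : hp J = QQ (~: (i |: Bs)) * hh i.
  rewrite QQC big_setU1 //= /hp (bigD1 i) //= hJi.
  have -> : \prod_(t < m | t != i) hh t ^+ J t = \prod_(t in Bs) hh t ^+ 2.
    rewrite big_mkcond [RHS]big_mkcond /=; apply: eq_bigr => t _.
    case: eqP => [->|ti]; first by rewrite (negbTE iB).
    case: ifP => tB; first by rewrite J2.
    by rewrite J0 ?expr0 // in_setU1 tB orbF; apply/eqP.
  by rewrite !exprS expr0; ring.
apply: QhL; have := cardsC (i |: Bs); rewrite card_ord cardsU1 iB /= add1n hb => hc.
apply/eqP; rewrite -(eqn_add2l delta); apply/eqP; exact: hc.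
Qed.

Lemma reduce : gen -> (1 <= delta)%N ->
  forall J, (\sum_t J t)%N = (2 * delta).+1 -> Tgt (hp J).
Proof.
move=> hg hd J.
move: {2}(psi J).+1 (ltnSn (psi J)) => K.
elim: K J => [|K IH] J //= hK hs.
case: (boolP [forall t, J t <= 2]%N) => [/forallP hle|]; first exact: caseA.
rewrite negb_forall => /existsP [i0]; rewrite -ltnNge => hi0.
case: (@arg_maxnP _ i0 xpredT J isT) => i _ hmax.
have h3 : (3 <= J i)%N by apply: leq_trans hi0 (hmax i0 isT).
have hmax' : forall t, (J t <= J i)%N by move=> t; exact: hmax t isT.
set Bs := [set t | (t != i) && (J i <= (J t).+1)%N].
case: (leqP (#|Bs| + 2) delta) => hB; last exact: caseB2.
have iB : i \notin Bs by rewrite inE eqxx.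
set C := ~: (i |: Bs).
have hC : (N <= #|C|)%N.
  have := cardsC (i |: Bs); rewrite cardsU1 iB card_ord -/C; lia.
pose s (a : 'I_N) : 'I_m := enum_val (widen_ord hC a).
have sinj : injective s by move=> a b /enum_val_inj /(congr1 val) /= /val_inj.
have sC : forall a, s a \in C by move=> a; exact: enum_valP.
have [u hu] := gen_rel (row i H) hg sinj.
pose dec := fun t => (J t - (t == i))%N.
have eJ : hp J = hh i * hp dec.
  rewrite -hp_unit -hp_add; apply: hp_ext => t /=; rewrite /dec.
  by case: eqP => [->|] /=; lia.
rewrite eJ {1}/hh hu mulr_suml.
apply: subsp_sum; first exact: Tgt_subsp.
move=> a _; rewrite -scalerAl; apply: subspZ; first exact: Tgt_subsp.
pose J' := fun t => (dec t + (t == s a))%N.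
have -> : hh (s a) * hp dec = hp J' by rewrite /J' hp_add hp_unit mulrC.
have sai : s a != i by have := sC a; rewrite !inE negb_or => /andP [].
have saB : s a \notin Bs by have := sC a; rewrite !inE negb_or => /andP [].
have hJs : (J (s a) + 2 <= J i)%N.
  by move: saB; rewrite inE sai /= -ltnNge; lia.
have eqo : forall t, t != i -> t != s a -> J' t = J t.
  by move=> t /negbTE ti /negbTE ts; rewrite /J' /dec ti ts !subn0 addn0.
have J'i : J' i = (J i).-1 by rewrite /J' /dec eqxx eq_sym (negbTE sai) addn0 subn1.
have J's : J' (s a) = (J (s a)).+1 by rewrite /J' /dec eqxx (negbTE sai) subn0 addn1.
have ias : i != s a by rewrite eq_sym.
apply: IH.
  have := @sum_swap (fun t => J t * J t)%N (fun t => J' t * J' t)%N i (s a) ias.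
  move=> /(_ (fun t ti ts => ltac:(by rewrite /= eqo))).
  rewrite -/(psi J) J'i J's; rewrite /psi in hK *; nia.
have := @sum_swap J J' i (s a) ias (fun t ti ts => eqo t ti ts).
rewrite J'i J's hs; lia.
Qed.

Definition PS (r : nat) (G : poly) :=
  forall S, subsp S -> (forall J, (\sum_t J t)%N = r -> S (hp J)) -> S G.

Lemma PS_one : PS 0 1.
Proof.
move=> S hS hJ; rewrite -hp0; apply: hJ.
by rewrite big1.
Qed.

Lemma PS_mul r1 r2 F G : PS r1 F -> PS r2 G -> PS (r1 + r2) (F * G).
Proof.
move=> hF hG S hS hJ.
apply: (hF (fun X => S (X * G))).
  split; first by rewrite mul0r; apply: subsp0.
  by move=> a x y Sx Sy; rewrite mulrDl -scalerAl; apply: (proj2 hS).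
move=> J1 hJ1; apply: (hG (fun Y => S (hp J1 * Y))).
  split; first by rewrite mulr0; apply: subsp0.
  by move=> a x y Sx Sy; rewrite mulrDr -scalerAr; apply: (proj2 hS).
move=> J2 hJ2; rewrite -hp_add; apply: hJ.
by rewrite big_split /= hJ1 hJ2.
Qed.

Lemma PS_hh j : PS 1 (hh j).
Proof.
move=> S hS hJ; rewrite -hp_unit; apply: hJ.
by rewrite (bigD1 j) //= eqxx big1 // => t /negbTE ->.
Qed.

Lemma PS_X t : gen -> (1 <= delta)%N -> PS 1 ('X_t).
Proof.
move=> hg hd.
have hle : (N <= m)%N by lia.
pose s0 (a : 'I_N) : 'I_m := widen_ord hle a.
have sinj : injective s0 by move=> a b /(congr1 val) /= /val_inj.
have eX : 'X_t = linform (delta_mx 0 t : 'rV[k]_N).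
  rewrite /linform (bigD1 t) //= mxE !eqxx scale1r big1 ?addr0 // => j tj.
  by rewrite mxE (negbTE tj) andbF scale0r.
have [u hu] := gen_rel (delta_mx 0 t) hg sinj.
rewrite eX hu => S hS hJ; apply: subsp_sum => // a _; apply: subspZ => //.
exact: PS_hh.
Qed.

Lemma PS_Xpow t e : gen -> (1 <= delta)%N -> PS e ('X_t ^+ e).
Proof.
move=> hg hd; elim: e => [|e IH]; first by rewrite expr0; exact: PS_one.
by rewrite exprS -add1n; apply: PS_mul => //; apply: PS_X.
Qed.

Lemma PS_mono (mm : 'X_{1..N}) : gen -> (1 <= delta)%N -> PS (mdeg mm) 'X_[mm].
Proof.
move=> hg hd; rewrite mpolyXE_id mdegE.
elim: (index_enum _) => [|x r IH]; first by rewrite !big_nil; exact: PS_one.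
by rewrite !big_cons; apply: PS_mul => //; apply: PS_Xpow.
Qed.

Lemma hom_Tgt F : gen -> (1 <= delta)%N -> F \is (2 * delta).+1.-homog -> Tgt F.
Proof.
move=> hg hd hF; rewrite [F]mpolyE big_seq; apply: subsp_sum; first exact: Tgt_subsp.
move=> mm hm; apply: subspZ; first exact: Tgt_subsp.
have := @PS_mono mm hg hd; rewrite (dhomog_mf hF hm) => hP.
apply: hP; first exact: Tgt_subsp.
by move=> J hJ; apply: reduce.
Qed.

End Geo.

Section Assembly.
Variables (k : fieldType) (delta n : nat) (H : 'M[k]_(delta + n, n.+1)).
Local Notation m := (delta + n)%N.
Local Notation N := n.+1.
Local Notation poly := {mpoly k[N]}.

Definition WW (F : poly) := homogeneous (2 * delta).+1 F /\ singular_on_Z H F.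

Lemma WW_subsp : subsp WW.
Proof.
split.
  split; first by rewrite homogeneousE rpred0.
  by move=> L _ v _ _ j; rewrite mderiv0 meval0.
move=> a x y [hx sx] [hy sy]; split.
  by move: hx hy; rewrite !homogeneousE => hx hy; apply: dhomogD => //; apply: dhomogZ.
move=> L hL v v0 hv j.
by rewrite mderivD mderivZ mevalD mevalZ (sx L hL v v0 hv j) (sy L hL v v0 hv j) mulr0 addr0.
Qed.

Lemma spanL_in (S : poly -> Prop) s F : subsp S -> (forall x, x \in s -> S x) ->
  spanL s F -> S F.
Proof.
move=> hS hs; elim: s F hs => [|x s IH] F hs /=; first by move=> ->; exact: subsp0.
move=> [c hc]; have -> : F = c *: x + (F - c *: x) by rewrite addrC subrK.
apply: subspD => //; first by apply: subspZ => //; apply: hs; rewrite inE eqxx.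
by apply: IH => // y ys; apply: hs; rewrite inE ys orbT.
Qed.

Lemma hprod_W e : admissible delta e -> WW (hprod H e).
Proof.
move=> /andP [/eqP hs hsupp]; split.
  rewrite homogeneousE -hs; exact: (hp_homog H (fun i => e i : nat)).
move=> L hL v v0 hv.
pose SP := [set i | (e i : nat) != 0%N].
have cSP : (delta + 2 <= #|SP|)%N.
  suff -> : #|SP| = #|[pred i | (e i : nat) != 0%N]| by [].
  by apply: eq_card => i; rewrite inE.
have cD : (#|SP :\: L| <= delta)%N.
  have : (#|SP :\: L| <= #|~: L|)%N by apply: subset_leq_card; rewrite setDE subsetIr.
  by have := cardsC L; rewrite card_ord hL; lia.
have : (1 < #|SP :&: L|)%N.
  by move: cSP cD; rewrite -(cardsID L SP); move: #|SP :&: L| #|SP :\: L| => x y; lia.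
move=> /card_gt1P [a [b [aS bS ab]]].
move: aS bS; rewrite !inE => /andP [ea aL] /andP [eb bL].
apply: (@sing_hp k delta n H v L (fun i => e i : nat) a b hv aL bL ab); by rewrite lt0n.
Qed.

Lemma hIlist_adm x : x \in hIlist H -> exists2 e, admissible delta e & x = hprod H e.
Proof. by move=> /mapP [e]; rewrite mem_enum => he ->; exists e. Qed.

Lemma main_fixed (hk : [pchar k] =i pred0) (hd : (1 <= delta)%N) (hg : gen H) :
  (exists a b : nat,
      has_dim (fun F : poly => homogeneous (2 * delta).+1 F) a /\
      has_dim WW b /\ a = (b + n.+1 * 'C(delta + n, n))%N) /\
  (forall e, admissible delta e -> WW (hprod H e)) /\
  (forall F, WW F -> exists c : {ffun 'I_(delta + n) -> 'I_3} -> k,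
      F = \sum_(e | admissible delta e) c e *: hprod H e).
Proof.
have [B [iB BsubI Ispan]] := extract (hIlist H).
have BW : forall x, x \in B -> WW x.
  by move=> x /BsubI /hIlist_adm [e he ->]; apply: hprod_W.
have spanBW : forall F, spanL B F -> WW F.
  by move=> F; apply: spanL_in; [exact: WW_subsp|exact: BW].
have Qzero : forall F, spanL (Qs H) F -> WW F -> F = 0.
  move=> F /(spanL_map (Qidx_uniq delta n)) [c ->] [_ hs].
  rewrite big1_seq // => p /andP [_ hp].
  by rewrite (blockK hk hg hs hp) scale0r.
have WspanB : forall F, WW F -> spanL B F.
  move=> F hW; have := hom_Tgt hg hd (proj1 hW).
  rewrite /Tgt => /spanL_cat [F1 [F2 [h1 h2 e]]].
  have h1B : spanL B F1 by apply: spanL_sub h1.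
  have F20 : F2 = 0.
    apply: Qzero => //; have -> : F2 = F - F1 by rewrite e addrC addKr.
    by apply: subspB; [exact: WW_subsp|exact: hW|exact: spanBW].
  by rewrite e F20 addr0.
split; last split.
- exists (size B + size (Qs H))%N, (size B); split; last split.
  + exists (B ++ Qs H); split; first by rewrite size_cat.
    split.
      move=> F; rewrite mem_cat => /orP [/BW [] //|/mapP [p hp ->]].
      by rewrite homogeneousE; apply: Qf_homog; move: hp; rewrite QidxP => /eqP.
    split.
      apply: lin_indepE; apply: indepL_cat => //.
        apply: indepL_map; first exact: Qidx_uniq.
        move=> c hc p hp; apply: (blockK hk hg _ hp).
        by rewrite hc => L _ v _ _ j; rewrite mderiv0 meval0.
      by move=> F /spanBW hW hQ; apply: Qzero.
    move=> F hF; apply/in_spanE; move: hF; rewrite homogeneousE => hF.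
    have := hom_Tgt hg hd hF; apply: spanL_sub => x; rewrite mem_cat => /orP [/Ispan hx|hx].
      exact: spanL_catl.
    by apply: spanL_mem; rewrite mem_cat hx orbT.
  + exists B; split => //; split => //; split; first exact: lin_indepE.
    by move=> F /WspanB /in_spanE.
  + by rewrite size_Qs mulnC.
- exact: hprod_W.
- move=> F /WspanB hB.
  have : spanL (hIlist H) F.
    by apply: spanL_sub hB => x /BsubI; apply: spanL_mem.
  move/(spanL_map (enum_uniq _)) => [c ->]; exists c.
  by rewrite big_enum /=; apply: eq_bigl => e; rewrite inE.
Qed.

End Assembly.

Section Poly.
Variables (k : fieldType) (delta n : nat).
Local Notation m := (delta + n)%N.
Local Notation N := n.+1.

Lemma natr_inj0 (hk : [pchar k] =i pred0) (x y : nat) :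
  ((x%:R : k) == y%:R) = (x == y).
Proof.
wlog xy : x y / (x <= y)%N.
  move=> hw; case: (leqP x y) => h; first exact: hw.
  by rewrite eq_sym hw ?(ltnW h) // eq_sym.
have /pcharf0P hc := hk.
by rewrite eq_sym -subr_eq0 -natrB // hc subn_eq0 eqn_leq xy.
Qed.

Definition Ms (s : {ffun 'I_N -> 'I_m}) : 'M[{mpoly k[m * N]}]_N :=
  \matrix_(a, b) 'X_(mxvec_index (s a) b).
Definition PP : {mpoly k[m * N]} :=
  \prod_(s : {ffun 'I_N -> 'I_m} | injectiveb s) \det (Ms s).

Lemma evPP (H : 'M[k]_(m, N)) :
  PP.@[fun j => mxvec H 0 j] =
  \prod_(s : {ffun 'I_N -> 'I_m} | injectiveb s) \det (\matrix_(a, b) H (s a) b).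
Proof.
rewrite /PP rmorph_prod; apply: eq_bigr => s _.
rewrite -det_map_mx; congr (\det _); apply/matrixP => a b.
by rewrite !mxE /= mevalXU mxvecE.
Qed.

Lemma PP_gen (H : 'M[k]_(m, N)) : PP.@[fun j => mxvec H 0 j] != 0 -> gen H.
Proof.
rewrite evPP => /prodf_neq0 hf s sinj.
have := hf (finfun s); rewrite (_ : injectiveb (finfun s)); last first.
  by apply/injectiveP => a b; rewrite !ffunE; exact: sinj.
move=> /(_ isT) hs; rewrite (_ : \matrix_(a, b) H (s a) b = \matrix_(a, b) H (finfun s a) b) //.
by apply/matrixP => a b; rewrite !mxE ffunE.
Qed.

Lemma PP_nz (hk : [pchar k] =i pred0) : PP != 0.
Proof.
pose H0 : 'M[k]_(m, N) := \matrix_(i, b) ((i : nat)%:R) ^+ b.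
apply/negP => /eqP P0.
have : PP.@[fun j => mxvec H0 0 j] != 0.
  rewrite evPP; apply/prodf_neq0 => s sinj.
  pose r : 'rV[k]_N := \row_a ((s a : nat)%:R).
  have -> : \matrix_(a, b) H0 (s a) b = (Vandermonde N r)^T.
    by apply/matrixP => a b; rewrite !mxE.
  rewrite det_tr det_Vandermonde; apply/prodf_neq0 => i _; apply/prodf_neq0 => j ij.
  rewrite !mxE subr_eq0 natr_inj0 //; apply/negP => /eqP /val_inj e.
  by move/injectiveP: sinj => /(_ _ _ e) eij; rewrite eij ltnn in ij.
by rewrite P0 meval0 eqxx.
Qed.

End Poly.

Unset Implicit Arguments. Set Strict Implicit.

Theorem corollary7p8 (k : closedFieldType) (hk : [pchar k] =i pred0)
    (delta n : nat) (hdelta : (1 <= delta)%N) (hn : (1 <= n)%N) :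
  exists P : {mpoly k[(delta + n) * n.+1]}, P != 0 /\
  forall H : 'M[k]_(delta + n, n.+1),
    P.@[fun j => mxvec H 0 j] != 0 ->
    let W := fun F : {mpoly k[n.+1]} =>
               homogeneous (2 * delta).+1 F /\ singular_on_Z H F in
    (exists a b : nat,
        has_dim (fun F : {mpoly k[n.+1]} => homogeneous (2 * delta).+1 F) a /\
        has_dim W b /\ a = (b + n.+1 * 'C(delta + n, n))%N) /\
    (forall e, admissible delta e -> W (hprod H e)) /\
    (forall F, W F -> exists c : {ffun 'I_(delta + n) -> 'I_3} -> k,
        F = \sum_(e | admissible delta e) c e *: hprod H e).
Proof.
exists (PP k delta n); split; first exact: PP_nz.
move=> H hH; exact: (main_fixed hk hdelta (PP_gen hH)).
Qed.
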